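(* Let $Y$ be a separable infinite-dimensional Hilbert space and let $U\in L(Y)$ be a unitary operator. For every $\varepsilon>0$ there exist a separable Hilbert space $X$, a diagonal operator $D_{\mathrm{diag}}\in L(X)$ with $\|D_{\mathrm{diag}}\|\le 1+\varepsilon$, and an isometry $V:Y\to X$ such that $V^*D_{\mathrm{diag}}V=U$.
   Context: An operator $D\in L(X)$ is diagonal if $X$ has an orthonormal basis consisting of eigenvectors of $D$. *)

(* Defs.v *)
From HB Require Import structures.
From mathcomp Require Import all_boot all_order all_algebra.
From mathcomp Require Import complex.
From mathcomp Require Import reals.
Set Implicit Arguments. Unset Strict Implicit. Unset Printing Implicit Defensive.
Import Order.TTheory GRing.Theory Num.Theory.
Local Open Scope ring_scope.
Local Open Scope complex_scope.

Record hilbert (R : realType) := Hilbert {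
  hcarrier :> lmodType R[i];
  hinner : hcarrier -> hcarrier -> R[i];
  hinnerDl : forall (a : R[i]) (x y z : hcarrier),
      hinner (a *: x + y) z = a * hinner x z + hinner y z;
  hinnerC : forall x y : hcarrier, hinner y x = (hinner x y)^*;
  hinner_ge0 : forall x : hcarrier, 0 <= hinner x x;
  hinner_eq0 : forall x : hcarrier, hinner x x = 0 -> x = 0;
  hcomplete : forall u : nat -> hcarrier,
      (forall e : R, 0 < e -> exists N, forall m n, (N <= m)%N -> (N <= n)%N ->
          Num.sqrt (complex.Re (hinner (u m - u n) (u m - u n))) < e) ->
      exists l : hcarrier, forall e : R, 0 < e -> exists N, forall n, (N <= n)%N ->
          Num.sqrt (complex.Re (hinner (u n - l) (u n - l))) < e
}.

Section HilbertDefs.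
Variable R : realType.

Definition hnorm (X : hilbert R) (x : X) : R :=
  Num.sqrt (complex.Re (hinner x x)).

Definition separable (X : hilbert R) : Prop :=
  exists d : nat -> X, forall (x : X) (e : R), 0 < e -> exists n, hnorm (x - d n) < e.

Definition infinite_dim (X : hilbert R) : Prop :=
  ~ exists (n : nat) (s : 'I_n -> X),
      forall x : X, exists c : 'I_n -> R[i], x = \sum_(i < n) c i *: s i.

Definition is_linear (X Y : hilbert R) (T : X -> Y) : Prop :=
  forall (a : R[i]) (x y : X), T (a *: x + y) = a *: T x + T y.

Definition bounded_op (X Y : hilbert R) (T : X -> Y) : Prop :=
  is_linear T /\ exists M : R, forall x : X, hnorm (T x) <= M * hnorm x.

Definition is_adjoint (X Y : hilbert R) (T : X -> Y) (S : Y -> X) : Prop :=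
  forall (x : X) (y : Y), hinner (T x) y = hinner x (S y).

Definition unitary_op (Y : hilbert R) (U : Y -> Y) : Prop :=
  bounded_op U /\ exists S : Y -> Y, is_adjoint U S /\
    (forall y, S (U y) = y) /\ (forall y, U (S y) = y).

Definition lin_isometry (Y X : hilbert R) (V : Y -> X) : Prop :=
  is_linear V /\ forall y : Y, hnorm (V y) = hnorm y.

Definition orthonormal_basis (X : hilbert R) (B : X -> Prop) : Prop :=
  (forall b, B b -> hinner b b = 1) /\
  (forall b c, B b -> B c -> b <> c -> hinner b c = 0) /\
  (forall x : X, (forall b, B b -> hinner x b = 0) -> x = 0).

Definition diagonal (X : hilbert R) (D : X -> X) : Prop :=
  bounded_op D /\ exists B : X -> Prop, orthonormal_basis B /\
    forall b, B b -> exists lam : R[i], D b = lam *: b.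

End HilbertDefs.

(* Main.v *)
From Pilot Require Import Defs.
From HB Require Import structures.
From mathcomp Require Import all_boot all_order all_algebra.
From mathcomp Require Import complex.
From mathcomp Require Import reals.
From mathcomp Require all_field all_solvable classical_sets boolp zify ring lra.
Import Order.TTheory GRing.Theory Num.Theory.
Local Open Scope ring_scope.

Module PilotHelpers.
Import all_field all_solvable classical_sets boolp zify ring lra.
Set Implicit Arguments. Unset Strict Implicit. Unset Printing Implicit Defensive.
Local Open Scope ring_scope.
Local Open Scope complex_scope.
Local Open Scope classical_set_scope.
Local Open Scope ring_scope.
Local Open Scope complex_scope.

Section Basic.
Variable R : realType.
Implicit Types X : hilbert R.

Lemma ge0_complexE (z : R[i]) : 0 <= z -> z = (complex.Re z)%:C /\ 0 <= complex.Re z.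
Proof.
rewrite lecE => /andP[/eqP h1 h2]; split => //.
by case: z h1 h2 => a b /= ->.
Qed.

Lemma hnorm_ge0 X (x : X) : 0 <= hnorm x.
Proof. exact: sqrtr_ge0. Qed.

Lemma hinner_norm X (x : X) : hinner x x = ((hnorm x) ^+ 2)%:C.
Proof.
have [h1 h2] := ge0_complexE (hinner_ge0 x).
by rewrite /hnorm sqr_sqrtr.
Qed.

Lemma hinner0l X (z : X) : hinner 0 z = 0.
Proof.
have := hinnerDl 1 0 0 z; rewrite scaler0 addr0 mul1r => h.
by rewrite -[LHS]addr0 in h; exact: (esym (addrI _ h)).
Qed.

Lemma hinnerZl X a (x z : X) : hinner (a *: x) z = a * hinner x z.
Proof. by have := hinnerDl a x 0 z; rewrite addr0 hinner0l addr0. Qed.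

Lemma hinnerDl1 X (x y z : X) : hinner (x + y) z = hinner x z + hinner y z.
Proof. by have := hinnerDl 1 x y z; rewrite scale1r mul1r. Qed.

Lemma hinner0r X (z : X) : hinner z 0 = 0.
Proof. by rewrite hinnerC hinner0l conjc0. Qed.

Lemma hinnerZr X a (x z : X) : hinner z (a *: x) = a^* * hinner z x.
Proof. by rewrite hinnerC hinnerZl rmorphM /= -hinnerC. Qed.

Lemma hinnerDr X (x y z : X) : hinner z (x + y) = hinner z x + hinner z y.
Proof. by rewrite hinnerC hinnerDl1 rmorphD /= -!hinnerC. Qed.

Lemma hinner_suml X (I : Type) (r : seq I) (P : pred I) (F : I -> X) (z : X) :
  hinner (\sum_(i <- r | P i) F i) z = \sum_(i <- r | P i) hinner (F i) z.
Proof.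
by apply: (big_morph (fun x => hinner x z)) => [x y|]; rewrite ?hinnerDl1 ?hinner0l.
Qed.

Lemma hinner_sumr X (I : Type) (r : seq I) (P : pred I) (F : I -> X) (z : X) :
  hinner z (\sum_(i <- r | P i) F i) = \sum_(i <- r | P i) hinner z (F i).
Proof.
by apply: (big_morph (fun x => hinner z x)) => [x y|]; rewrite ?hinnerDr ?hinner0r.
Qed.

Lemma hinnerNl X (x z : X) : hinner (- x) z = - hinner x z.
Proof. by rewrite -scaleN1r hinnerZl mulN1r. Qed.

Lemma hinnerNr X (x z : X) : hinner z (- x) = - hinner z x.
Proof. by rewrite -scaleN1r hinnerZr rmorphN1 mulN1r. Qed.

Lemma lin0 X X' (T : X -> X') : is_linear T -> T 0 = 0.
Proof.
move=> hT; have := hT 1 0 0; rewrite scale1r addr0 scale1r => h.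
by rewrite -[LHS]addr0 in h; exact: (esym (addrI _ h)).
Qed.

Lemma linZ X X' (T : X -> X') a x : is_linear T -> T (a *: x) = a *: T x.
Proof. by move=> hT; have := hT a x 0; rewrite addr0 lin0 // addr0. Qed.

Lemma linD X X' (T : X -> X') x y : is_linear T -> T (x + y) = T x + T y.
Proof. by move=> hT; have := hT 1 x y; rewrite !scale1r. Qed.

Lemma lin_sum X X' (T : X -> X') (I : Type) (r : seq I) (P : pred I) (F : I -> X) :
  is_linear T -> T (\sum_(i <- r | P i) F i) = \sum_(i <- r | P i) T (F i).
Proof.
move=> hT; apply: (big_morph T) => [x y|]; rewrite ?linD ?lin0 //.
Qed.

Lemma conjR (x : R) : Num.conj (x%:C) = x%:C.
Proof. exact: conjc_real. Qed.

End Basic.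


Section Prod.
Variable R : realType.

Lemma term_le_sum (k : nat) (a : 'I_k -> R) j : (forall j, 0 <= a j) -> a j <= \sum_i a i.
Proof.
move=> h; rewrite (bigD1 j) //= lerDl; exact: sumr_ge0.
Qed.

Lemma sqrt_sum_le (k : nat) (a : 'I_k -> R) : (forall j, 0 <= a j) ->
  Num.sqrt (\sum_j a j ^+ 2) <= \sum_j a j.
Proof.
move=> h; have s0 : 0 <= \sum_j a j by exact: sumr_ge0.
rewrite -[X in _ <= X](ger0_norm s0) -sqrtr_sqr ler_wsqrtr //.
rewrite expr2 mulr_suml; apply: ler_sum => j _; rewrite expr2.
by apply: ler_wpM2l; [exact: h | exact: term_le_sum].
Qed.

Lemma term_le_sqrt_sum (k : nat) (a : 'I_k -> R) j : (forall j, 0 <= a j) ->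
  a j <= Num.sqrt (\sum_i a i ^+ 2).
Proof.
move=> h; rewrite -[X in X <= _](ger0_norm (h j)) -sqrtr_sqr; apply: ler_wsqrtr.
by apply: (@term_le_sum k (fun i => a i ^+ 2) j) => i; exact: sqr_ge0.
Qed.
End Prod.

Section ProdSpace.
Variable R : realType.
Variable Y : hilbert R.
Variable k : nat.

Definition PT := {ffun 'I_k -> Y}.
Definition pinner (x y : PT) : R[i] := \sum_j hinner (x j) (y j).
Definition ssq (x : PT) : R := \sum_j hnorm (x j) ^+ 2.

Lemma pinner_norm x : pinner x x = (ssq x)%:C.
Proof. by rewrite /pinner /ssq rmorph_sum; apply: eq_bigr => j _; rewrite hinner_norm. Qed.

Lemma ssq_ge0 x : 0 <= ssq x.
Proof. by apply: sumr_ge0 => j _; exact: sqr_ge0. Qed.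

Lemma pinnerDl a (x y z : PT) : pinner (a *: x + y) z = a * pinner x z + pinner y z.
Proof.
rewrite /pinner mulr_sumr -big_split /=; apply: eq_bigr => j _.
by rewrite !ffunE hinnerDl.
Qed.

Lemma pinnerC (x y : PT) : pinner y x = (pinner x y)^*.
Proof. by rewrite /pinner rmorph_sum; apply: eq_bigr => j _; rewrite hinnerC. Qed.

Lemma pinner_ge0 (x : PT) : 0 <= pinner x x.
Proof. by apply: sumr_ge0 => j _; exact: hinner_ge0. Qed.

Lemma pinner_eq0 (x : PT) : pinner x x = 0 -> x = 0.
Proof.
move=> /eqP; rewrite /pinner psumr_eq0; last by move=> j _; exact: hinner_ge0.
move=> /allP h; apply/ffunP => j; rewrite ffunE; apply: hinner_eq0.
by apply/eqP; apply: h; rewrite mem_index_enum.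
Qed.

Lemma pnormE (x : PT) : Num.sqrt (complex.Re (pinner x x)) = Num.sqrt (ssq x).
Proof. by rewrite pinner_norm. Qed.

Lemma comp_le (x : PT) j : hnorm (x j) <= Num.sqrt (ssq x).
Proof. by apply: (@term_le_sqrt_sum R k (fun j => hnorm (x j))) => i; exact: hnorm_ge0. Qed.

Lemma sum_ge (x : PT) : Num.sqrt (ssq x) <= \sum_j hnorm (x j).
Proof. by apply: (@sqrt_sum_le R k (fun j => hnorm (x j))) => i; exact: hnorm_ge0. Qed.

Lemma sum_small (x : PT) (e : R) : 0 < e -> (forall j, hnorm (x j) < e / k.+1%:R) ->
  Num.sqrt (ssq x) < e.
Proof.
move=> e0 h; apply: (le_lt_trans (sum_ge x)).
apply: (@le_lt_trans _ _ (\sum_(j < k) (e / k.+1%:R))).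
  by apply: ler_sum => j _; exact: ltW.
rewrite sumr_const card_ord -[_ *+ k]mulr_natr mulrAC ltr_pdivrMr ?ltr0Sn //.
by rewrite ltr_pM2l // ltr_nat.
Qed.

Lemma pcomplete : forall u : nat -> PT,
  (forall e : R, 0 < e -> exists N, forall m n, (N <= m)%N -> (N <= n)%N ->
      Num.sqrt (complex.Re (pinner (u m - u n) (u m - u n))) < e) ->
  exists l : PT, forall e : R, 0 < e -> exists N, forall n, (N <= n)%N ->
      Num.sqrt (complex.Re (pinner (u n - l) (u n - l))) < e.
Proof.
move=> u hu.
have hl : forall j, exists lj : Y, forall e : R, 0 < e -> exists N, forall n, (N <= n)%N ->
      hnorm (u n j - lj) < e.
  move=> j; apply: hcomplete => e e0; have [N hN] := hu e e0; exists N => m n hm hn.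
  apply: le_lt_trans (hN m n hm hn); rewrite pnormE.
  by have := comp_le (u m - u n) j; rewrite !ffunE.
have [l hlP] := choice hl.
exists [ffun j => l j] => e e0.
have e1 : 0 < e / k.+1%:R by rewrite divr_gt0 ?ltr0Sn.
have hN : forall j, exists N, forall n, (N <= n)%N -> hnorm (u n j - l j) < e / k.+1%:R.
  by move=> j; exact: hlP.
have [Nf hNf] := choice hN.
exists (\max_j Nf j) => n hn; rewrite pnormE; apply: sum_small => // j.
rewrite !ffunE; apply: hNf; apply: leq_trans hn; exact: leq_bigmax.
Qed.

Definition PH : hilbert R := @Hilbert R PT pinner pinnerDl pinnerC pinner_ge0 pinner_eq0 pcomplete.

Lemma PH_norm (x : PH) : hnorm x = Num.sqrt (ssq x).
Proof. exact: pnormE. Qed.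

End ProdSpace.

Section ProdSep.
Variable R : realType.
Variable Y : hilbert R.
Variable k : nat.

Lemma PH_separable : Defs.separable Y -> Defs.separable (PH Y k).
Proof.
move=> [d hd].
pose dP (n : nat) : PH Y k := match (unpickle n : option {ffun 'I_k -> nat}) with
  Some f => [ffun j => d (f j)] | None => 0 end.
exists dP => x e e0.
have e1 : 0 < e / k.+1%:R by rewrite divr_gt0 ?ltr0Sn.
have [g hg] := choice (fun j => hd (x j) _ e1).
exists (pickle [ffun j => g j]); rewrite PH_norm /dP pickleK; apply: sum_small => // j.
by rewrite !ffunE.
Qed.
End ProdSep.


Section Basis.
Variable R : realType.
Variable Y : hilbert R.

Definition ONset (A : set Y) :=
  (forall b, A b -> hinner b b = 1) /\
  (forall b c, A b -> A c -> b <> c -> hinner b c = 0).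

Lemma exists_ONB : exists B : Y -> Prop, orthonormal_basis B.
Proof.
have [A [[A1 A2] Amax]] : exists A, ONset A /\ forall B, A `<` B -> ~ ONset B.
  apply: Zorn_bigcup => F FP Ftot; split.
    by move=> b [X FX Xb]; have [h _] := FP X FX; exact: h.
  move=> b c [X FX Xb] [Z FZ Zc] bc.
  have [XZ|ZX] := Ftot X Z FX FZ.
    by have [_ h] := FP Z FZ; apply: h => //; exact: XZ.
  by have [_ h] := FP X FX; apply: h => //; exact: ZX.
exists A; split => //; split => // x hx.
have [//|x0] := eqVneq x 0; exfalso.
have hx0 : hnorm x != 0.
  apply: contra x0 => /eqP h; apply/eqP; apply: hinner_eq0.
  by rewrite hinner_norm h expr0n.
set c := (hnorm x)^-1.
set u := c%:C *: x.
have hxu : hinner x u = (hnorm x)%:C.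
  rewrite /u hinnerZr conjR hinner_norm -rmorphM /=; congr (_%:C).
  by rewrite /c expr2 mulrA mulVf // mul1r.
have uA : ~ A u.
  move=> Au; move: hxu; rewrite hx // => /(congr1 (@complex.Re _)) /= h0.
  by move: hx0; rewrite -h0 eqxx.
apply: (Amax (A `|` [set u])).
  split; first by move=> y Ay; left.
  by move=> h; apply: uA; apply: h; right.
have huu : hinner u u = 1.
  rewrite {1}/u hinnerZl hxu -rmorphM /=.
  by rewrite /c mulVf.
have hub : forall b, A b -> hinner u b = 0.
  by move=> b Ab; rewrite /u hinnerZl hx // mulr0.
split.
  by move=> b [Ab|->]; [exact: A1|].
move=> b d [Ab|->] [Ad|->] bd.
- exact: A2.
- by rewrite hinnerC hub // conjc0.
- exact: hub.
- by [].
Qed.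
End Basis.


Section Root.
Variable R : realType.

Lemma prim_root_exists_c n : (n > 0)%N -> exists z : R[i], n.-primitive_root z.
Proof.
pose p : {poly R[i]} := 'X^n - 1; have [r Dp] := closed_field_poly_normal p.
move=> n_gt0; rewrite (monicP _) ?monicXnsubC // scale1r in Dp.
have rn1: all n.-unity_root r by apply/allP=> z; rewrite -root_prod_XsubC -Dp.
have sz_r: (n < (size r).+1)%N.
  by rewrite -(size_prod_XsubC r id) -Dp size_XnsubC.
have [|z] := hasP (has_prim_root n_gt0 rn1 _ sz_r); last by exists z.
by rewrite -separable_prod_XsubC -Dp separable_Xn_sub_1 // pnatr_eq0 -lt0n.
Qed.

Lemma geom_sum (w : R[i]) (K : nat) : w ^+ K = 1 -> w != 1 ->
  \sum_(j < K) w ^+ j = 0.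
Proof.
move=> wK w1; have := subrX1 w K; rewrite wK subrr => /esym/eqP.
by rewrite mulf_eq0 subr_eq0 (negbTE w1) /= => /eqP.
Qed.

Variables (K : nat) (om : R[i]).
Hypothesis hom : K.-primitive_root om.

Lemma root_sum e : \sum_(j < K) om ^+ (j * e) = if (K %| e)%N then K%:R else 0.
Proof.
have hK := prim_expr_order hom.
under eq_bigr do rewrite mulnC exprM.
case: ifP => he.
  rewrite (prim_order_dvd hom) in he; rewrite (eqP he).
  by under eq_bigr do rewrite expr1n; rewrite sumr_const card_ord.
apply: geom_sum; first by rewrite -exprM mulnC exprM hK expr1n.
by rewrite -(prim_order_dvd hom) he.
Qed.

Lemma norm_om : `|om| = 1.
Proof.
have hK := prim_expr_order hom.
have K0 := prim_order_gt0 hom.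
have : `|om| ^+ K = 1 by rewrite -normrX hK normr1.
by move/eqP; rewrite pexpr_eq1 // => /eqP.
Qed.

Lemma conj_om_pow j n : (n <= K)%N -> Num.conj (om ^+ (j * n)) = om ^+ (j * (K - n)).
Proof.
move=> nK; set z := om ^+ (j * n).
have hK := prim_expr_order hom.
have z1 : z * Num.conj z = 1.
  by rewrite -sqr_normc /z normrX norm_om expr1n expr1n.
have z2 : z * om ^+ (j * (K - n)) = 1.
  by rewrite /z -exprD -mulnDr subnKC // mulnC exprM hK expr1n.
have z0 : z != 0 by apply/negP => /eqP z0; move: z2; rewrite z0 mul0r => /eqP; rewrite eq_sym oner_eq0.
by apply: (mulfI z0); rewrite z1 z2.
Qed.
End Root.


Lemma dv_cond (K m n n' a : nat) : (a <= 1)%N -> (n < m.+1)%N -> (n' < m.+1)%N -> (m.+1 < K)%N ->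
  (K %| a + (n + (K - n')))%N = (n' == n + a).
Proof.
move=> ha hn hn' hK; apply/idP/eqP.
  move/dvdnP => [q hq]; case: q hq => [|[|q]] hq.
  - by rewrite mul0n in hq; lia.
  - by rewrite mul1n in hq; lia.
  - by rewrite !mulSn in hq; lia.
move=> ->; have -> : (a + (n + (K - (n + a))) = K)%N by lia.
exact: dvdnn.
Qed.

Section Dil.
Variable R : realType.
Variable Y : hilbert R.

Lemma iter_lin n (f : Y -> Y) : is_linear f -> is_linear (iter n f).
Proof.
move=> hf; elim: n => [|n IH] a x y //=.
by rewrite IH hf.
Qed.

Lemma lin_comb N (F : 'I_N -> Y -> Y) (c : 'I_N -> R[i]) : (forall n, is_linear (F n)) ->
  is_linear (fun y => \sum_(n < N) c n *: F n y).
Proof.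
move=> hF a x y; rewrite scaler_sumr -big_split /=; apply: eq_bigr => n _.
by rewrite hF scalerDr !scalerA mulrC.
Qed.

Variables (U S : Y -> Y).
Hypotheses (hU : is_linear U) (hS : is_linear S) (hadj : is_adjoint U S)
  (hSU : forall y, S (U y) = y).

Lemma SnUn n w : iter n S (iter n U w) = w.
Proof. by elim: n w => [|n IH] w //=; rewrite -[S (iter n S _)]iterS iterSr hSU IH. Qed.

Lemma adj_iter n y z : hinner (iter n U y) z = hinner y (iter n S z).
Proof. by elim: n y z => [|n IH] y z //=; rewrite hadj IH -iterS iterSr. Qed.

Lemma sum_if N c (F : nat -> Y) :
  \sum_(i < N) (if (i == c :> nat) then F i else 0) = if (c < N)%N then F c else 0.
Proof.
case: ltnP => h.
  rewrite (bigD1 (Ordinal h)) //= eqxx big1 ?addr0 // => i hi.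
  by case: eqP => // hic; move/eqP: hi; case; apply: val_inj.
by rewrite big1 // => i _; case: eqP => // hic; move: (ltn_ord i); rewrite hic ltnNge h.
Qed.

Variables (K m : nat) (om : R[i]).
Hypotheses (hom : K.-primitive_root om) (hmK : (m.+1 < K)%N).

Definition T (j : nat) (y : Y) : Y := \sum_(n < m.+1) om ^+ (j * (K - n)) *: iter n U y.
Definition Ts (j : nat) (z : Y) : Y := \sum_(n < m.+1) om ^+ (j * n) *: iter n S z.

Lemma Ts_lin j : is_linear (Ts j).
Proof. by apply: (@lin_comb m.+1 (fun n => iter n S)) => n; exact: iter_lin. Qed.

Lemma T_lin j : is_linear (T j).
Proof. by apply: (@lin_comb m.+1 (fun n => iter n U)) => n; exact: iter_lin. Qed.

Lemma key a y : (a <= 1)%N ->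
  \sum_(j < K) om ^+ (j * a) *: Ts j (T j y) =
  \sum_(n < m.+1) (if (n + a < m.+1)%N then K%:R *: iter a U y else 0).
Proof.
move=> ha.
have step : forall j : 'I_K, om ^+ (j * a) *: Ts j (T j y) =
   \sum_(n < m.+1) \sum_(n' < m.+1)
      om ^+ (j * (a + (n + (K - n')))) *: iter n S (iter n' U y).
  move=> j; rewrite /Ts scaler_sumr; apply: eq_bigr => n _.
  rewrite /T (lin_sum (T:=iter n S)); last exact: iter_lin.
  rewrite scalerA scaler_sumr; apply: eq_bigr => n' _.
  rewrite (linZ (T:=iter n S)); last exact: iter_lin.
  by rewrite scalerA -!exprD -!mulnDr addnA.
rewrite (eq_bigr _ (fun j _ => step j)) exchange_big /=; apply: eq_bigr => n _.
rewrite exchange_big /=.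
under eq_bigr do rewrite -scaler_suml root_sum //.
rewrite (eq_bigr (fun n' : 'I_m.+1 => if n' == (n + a)%N :> nat
   then K%:R *: iter n S (iter n' U y) else 0)); last first.
  by move=> n' _; rewrite (dv_cond ha (ltn_ord n) (ltn_ord n') hmK); case: eqP; rewrite ?scale0r.
rewrite (@sum_if m.+1 (n + a)%N (fun n' => K%:R *: iter n S (iter n' U y))).
by rewrite iterD SnUn.
Qed.
End Dil.


Section Main.
Variable R : realType.
Variable Y : hilbert R.

Lemma hnormZ' (z : Y) (a : R[i]) (r : R) : a * Num.conj a = (r ^+ 2)%:C -> 0 <= r ->
  hnorm (a *: z) = r * hnorm z.
Proof.
move=> ha r0; rewrite /hnorm hinnerZl hinnerZr mulrA ha hinner_norm -rmorphM /=.
rewrite -exprMn sqrtr_sqr ger0_norm //.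
  by rewrite sqrtr_sqr ger0_norm // hnorm_ge0.
exact: mulr_ge0 r0 (hnorm_ge0 z).
Qed.

Variables (K m : nat) (om : R[i]).
Hypotheses (hom : K.-primitive_root om) (hmK : (m.+1 < K)%N) (m0 : (0 < m)%N).

Definition PX := PH Y K.
Definition delta (j : 'I_K) (b : Y) : PX := [ffun i => if i == j then b else 0].

Lemma pinner_delta j b j' b' : hinner (delta j b) (delta j' b') = if j == j' then hinner b b' else 0.
Proof.
rewrite /= /pinner (bigD1 j) //= big1 ?addr0.
  by rewrite !ffunE eqxx; case: eqP => _; rewrite ?hinner0r.
by move=> i /negbTE hi; rewrite !ffunE hi hinner0l.
Qed.

Lemma pinner_deltar (x : PX) j b : hinner x (delta j b) = hinner (x j) b.
Proof.
rewrite /= /pinner (bigD1 j) //= big1 ?addr0.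
  by rewrite !ffunE eqxx.
by move=> i /negbTE hi; rewrite !ffunE hi hinner0r.
Qed.

Variable c : R.
Hypothesis c0 : 0 <= c.
Definition lam (j : 'I_K) : R[i] := c%:C * om ^+ j.
Definition Dop (x : PX) : PX := [ffun j => lam j *: x j].

Lemma lam_norm j : lam j * Num.conj (lam j) = (c ^+ 2)%:C.
Proof.
rewrite /lam rmorphM /= conjR mulrACA -sqr_normc normrX (norm_om hom) expr1n.
by rewrite expr1n mulr1 -rmorphM expr2.
Qed.

Lemma Dop_norm x : hnorm (Dop x) = c * hnorm x.
Proof.
rewrite !PH_norm /ssq.
under eq_bigr => j _ do rewrite ffunE (hnormZ' _ (lam_norm j)) // exprMn.
by rewrite -mulr_sumr sqrtrM ?sqr_ge0 // sqrtr_sqr ger0_norm.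
Qed.

Lemma Dop_diag : Defs.diagonal Dop.
Proof.
split.
  split; last by exists c => x; rewrite Dop_norm.
  by move=> a x y; apply/ffunP => j; rewrite !ffunE scalerDr !scalerA mulrC.
have [B [B1 [B2 B3]]] := exists_ONB Y.
exists (fun x => exists j b, B b /\ x = delta j b); split; last first.
  move=> x [j [b [Bb ->]]]; exists (lam j); apply/ffunP => i; rewrite !ffunE.
  by case: eqP => [->|_]; rewrite ?scaler0.
split.
  by move=> x [j [b [Bb ->]]]; rewrite pinner_delta eqxx; exact: B1.
split.
  move=> x y [j [b [Bb ->]]] [j' [b' [Bb' ->]]] hne; rewrite pinner_delta.
  case: eqP => // e; subst j'; apply: B2 => // ebb; apply: hne; by rewrite ebb.
move=> x hx; apply/ffunP => j; rewrite ffunE; apply: B3 => b Bb.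
by rewrite -pinner_deltar; apply: hx; exists j, b.
Qed.


Variables (U S : Y -> Y).
Hypotheses (hU : is_linear U) (hS : is_linear S) (hadj : is_adjoint U S)
  (hSU : forall y, S (U y) = y).
Variable kap : R.
Hypotheses (hkap : kap ^+ 2 * (K * m.+1)%:R = 1) (hc : c * m%:R = m.+1%:R).

Definition Vop (y : Y) : PX := [ffun j : 'I_K => kap%:C *: T U K m om j y].
Definition Wop (x : PX) : Y := \sum_(j < K) kap%:C *: Ts S m om j (x j).

Lemma T_adj (j : nat) y z : hinner (T U K m om j y) z = hinner y (Ts S m om j z).
Proof.
rewrite /T /Ts hinner_suml hinner_sumr; apply: eq_bigr => n _.
rewrite hinnerZl hinnerZr (adj_iter hadj) (conj_om_pow hom) //.
by apply: ltnW; apply: ltn_trans hmK.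
Qed.

Lemma VW_adj : is_adjoint Vop Wop.
Proof.
move=> y x; rewrite /= /pinner /Wop hinner_sumr; apply: eq_bigr => j _.
by rewrite ffunE hinnerZl hinnerZr conjR T_adj.
Qed.

Lemma WDV y : Wop (Dop (Vop y)) = U y.
Proof.
have e : forall j : 'I_K, kap%:C *: Ts S m om j (Dop (Vop y) j) =
   ((kap ^+ 2 * c)%:C) *: (om ^+ (j * 1) *: Ts S m om j (T U K m om j y)).
  move=> j; rewrite !ffunE scalerA (linZ _ _ (Ts_lin hS m om j)) !scalerA muln1 /lam.
  congr (_ *: _); rewrite !rmorphM /=; ring.
rewrite /Wop (eq_bigr _ (fun j _ => e j)) -scaler_sumr (key hS hSU hom hmK) //.
rewrite big_ord_recr /= addn1 ltnn addr0.
rewrite (eq_bigr (fun _ => K%:R *: U y)); last first.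
  by move=> n _; rewrite (_ : (n + 1 < m.+1)%N = true) // addn1 ltnS ltn_ord.
rewrite sumr_const card_ord -scaler_nat !scalerA.
rewrite -[X in X *: _]mulr1 -[in RHS](scale1r (U y)); congr (_ *: _).
rewrite mulr1 -!(rmorph_nat (real_complex R)) -!rmorphM /=; congr (_%:C).
have -> : ((m * K)%R%:R : R) = m%:R * K%:R by rewrite -natrM.
by rewrite -[RHS]hkap natrM -hc; ring.
Qed.

Lemma WV y : Wop (Vop y) = y.
Proof.
have e : forall j : 'I_K, kap%:C *: Ts S m om j (Vop y j) =
   ((kap ^+ 2)%:C) *: (om ^+ (j * 0) *: Ts S m om j (T U K m om j y)).
  move=> j; rewrite !ffunE (linZ _ _ (Ts_lin hS m om j)) !scalerA muln0 expr0 mulr1.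
  by rewrite rmorphXn /= expr2.
rewrite /Wop (eq_bigr _ (fun j _ => e j)) -scaler_sumr (key hS hSU hom hmK) //.
rewrite (eq_bigr (fun _ => K%:R *: y)); last first.
  by move=> n _; rewrite addn0 ltn_ord.
rewrite sumr_const card_ord -scaler_nat !scalerA.
rewrite -[in RHS](scale1r y); congr (_ *: _).
rewrite -!(rmorph_nat (real_complex R)) -!rmorphM /=; congr (_%:C).
have -> : ((m.+1 * K)%R%:R : R) = (K * m.+1)%:R by rewrite mulnC.
exact: hkap.
Qed.

Lemma V_iso : lin_isometry Vop.
Proof.
split.
  move=> a x y; apply/ffunP => j; rewrite !ffunE (T_lin hU K m om j) scalerDr !scalerA.
  by rewrite mulrC.
move=> y; rewrite {1}/hnorm VW_adj WV.
by [].
Qed.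
End Main.

End PilotHelpers.
Import PilotHelpers.
Unset Implicit Arguments.
Import ring lra.

Theorem proposition4p8 (R : realType) (Y : hilbert R) :
  separable Y -> infinite_dim Y ->
  forall U : Y -> Y, unitary_op U ->
  forall eps : R, 0 < eps ->
  exists (X : hilbert R) (D : X -> X) (V : Y -> X),
    separable X /\ diagonal D /\
    (forall x : X, hnorm (D x) <= (1 + eps) * hnorm x) /\
    lin_isometry V /\
    exists W : X -> Y, is_adjoint V W /\ forall y : Y, W (D (V y)) = U y.
Proof.
move=> hsep _ U [[hU _] [S [hadj [hSU hUS]]]] eps heps.
have hS : is_linear S.
  move=> a x y; rewrite -{1}(hUS x) -{1}(hUS y).
  by rewrite -(linZ _ _ hU) -(linD _ _ hU) hSU.
set m := (Num.Def.archi_bound (eps^-1)).+1.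
have m0 : (0 < m)%N by [].
have hm : eps^-1 < m%:R.
  have he : 0 < eps^-1 by rewrite invr_gt0.
  have hb := archi_boundP (ltW he).
  apply: (lt_le_trans hb); rewrite ler_nat; exact: leqnSn.
set K := m.+2.
have hmK : (m.+1 < K)%N by [].
have [om hom] := prim_root_exists_c R (ltn0Sn m.+1 : (0 < K)%N).
have mR0 : (m%:R : R) != 0 by rewrite pnatr_eq0 -lt0n.
set c : R := m.+1%:R / m%:R.
have c0 : 0 <= c by rewrite divr_ge0 ?ler0n.
have hc : c * m%:R = m.+1%:R by rewrite /c divfK.
have hce : c <= 1 + eps.
  rewrite /c -addn1 natrD mulrDl divff // lerD2l ler_pdivrMr ?ltr0n //.
  have h1 : eps * eps^-1 = 1 by rewrite mulfV // gt_eqF.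
  nra.
set kap := Num.sqrt ((K * m.+1)%:R^-1 : R).
have hkap : kap ^+ 2 * (K * m.+1)%:R = 1.
  rewrite sqr_sqrtr ?invr_ge0 ?ler0n // mulVf // pnatr_eq0 muln_eq0 //.
exists (PX Y K), (Dop om c), (Vop K m om U kap).
split; first exact: PH_separable.
split; first exact: Dop_diag.
split.
  move=> x; rewrite (Dop_norm hom c0); apply: ler_wpM2r => //; exact: hnorm_ge0.
split; first exact: (V_iso hom hmK hU hS hadj hSU hkap).
exists (Wop m om S kap); split; first exact: VW_adj.
exact: (WDV hom hmK hS hSU hkap hc).
Qed.
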